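(* Every flat cone sphere $\Sigma$ has an embedded spanning tree, i.e. a tree whose vertices are exactly the cone points of $\Sigma$, whose edges are straight line segments (geodesics in the flat metric) between cone points, and no two of whose edges cross.
   Context: A flat cone sphere is a metric on the $2$-sphere, locally isometric to the Euclidean plane except at finitely many cone points, each having a neighborhood isometric to a neighborhood of the apex of a Euclidean cone of angle $2\pi-\theta$ with $\theta\in(0,2\pi)$. *)

(* Defs.v *)
From Stdlib Require Import Reals Lra List.
Open Scope R_scope.

Record MetricSpace := {
  carrier :> Type;
  dist : carrier -> carrier -> R;
  dist_sep : forall x y, dist x y = 0 <-> x = y;
  dist_sym : forall x y, dist x y = dist y x;
  dist_tri : forall x y z, dist x z <= dist x y + dist y z
}.
Arguments dist {m} _ _.

Definition mcont {A B : Type} (dA : A -> A -> R) (dB : B -> B -> R) (f : A -> B) : Prop :=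
  forall x eps, 0 < eps -> exists delta, 0 < delta /\
    forall y, dA x y < delta -> dB (f x) (f y) < eps.

Definition S2 : Type :=
  { p : R * R * R | let '(a, b, c) := p in a * a + b * b + c * c = 1 }.
Definition dist3 (p q : R * R * R) : R :=
  let '(a1, b1, c1) := p in let '(a2, b2, c2) := q in
  sqrt ((a1 - a2) ^ 2 + (b1 - b2) ^ 2 + (c1 - c2) ^ 2).
Definition distS2 (p q : S2) : R := dist3 (proj1_sig p) (proj1_sig q).

Definition homeomorphic_to_S2 (X : MetricSpace) : Prop :=
  exists (f : X -> S2) (g : S2 -> X),
    (forall x, g (f x) = x) /\ (forall p, f (g p) = p) /\
    mcont (@dist X) distS2 f /\ mcont distS2 (@dist X) g.

Definition intrinsic (X : MetricSpace) : Prop :=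
  forall (x y : X) eps, 0 < eps -> exists z : X,
    dist x z <= dist x y / 2 + eps /\ dist z y <= dist x y / 2 + eps.

Definition dist2 (p q : R * R) : R :=
  sqrt ((fst p - fst q) ^ 2 + (snd p - snd q) ^ 2).

(** Euclidean cone of total angle [alpha] in polar coordinates (r, t),
    r >= 0, t taken modulo alpha.  [angsep] is the angular separation
    in [0, alpha/2]. *)
Definition angsep (alpha t1 t2 : R) : R :=
  let u := (t1 - t2) - alpha * IZR (Int_part ((t1 - t2) / alpha)) in
  Rmin u (alpha - u).
Definition cone_dist (alpha : R) (p q : R * R) : R :=
  let phi := angsep alpha (snd p) (snd q) in
  if Rlt_dec phi PI
  then sqrt (fst p ^ 2 + fst q ^ 2 - 2 * fst p * fst q * cos phi)
  else fst p + fst q.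

Definition locally_euclidean_at (X : MetricSpace) (p : X) : Prop :=
  exists eps (f : X -> R * R), 0 < eps /\
    (forall x y, dist p x < eps -> dist p y < eps -> dist2 (f x) (f y) = dist x y) /\
    (forall q, dist2 (f p) q < eps -> exists x, dist p x < eps /\ f x = q).

Definition cone_point_of_angle (X : MetricSpace) (p : X) (alpha : R) : Prop :=
  exists eps (f : X -> R * R), 0 < eps /\
    fst (f p) = 0 /\
    (forall x, dist p x < eps -> 0 <= fst (f x)) /\
    (forall x y, dist p x < eps -> dist p y < eps ->
       cone_dist alpha (f x) (f y) = dist x y) /\
    (forall r t, 0 <= r < eps ->
       exists x, dist p x < eps /\ cone_dist alpha (f x) (r, t) = 0).

Definition flat_cone_sphere (X : MetricSpace) (C : list X) : Prop :=
  homeomorphic_to_S2 X /\ intrinsic X /\ NoDup C /\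
  (forall p : X, ~ In p C -> locally_euclidean_at X p) /\
  (forall p : X, In p C ->
     exists theta, 0 < theta < 2 * PI /\ cone_point_of_angle X p (2 * PI - theta)).

(** Parametrized segments [spath : [0, slen] -> X]. *)
Record Seg (X : Type) := mkSeg { slen : R; spath : R -> X }.
Arguments slen {X} _.
Arguments spath {X} _ _.

(** A straight line segment between cone points: an embedded, unit-speed,
    locally distance-realising (i.e. locally straight) path joining two
    cone points and avoiding cone points in its interior. *)
Definition straight_segment (X : MetricSpace) (C : list X) (s : Seg X) : Prop :=
  0 < slen s /\
  In (spath s 0) C /\ In (spath s (slen s)) C /\
  (forall t, 0 < t < slen s -> ~ In (spath s t) C) /\
  (forall t1 t2, 0 <= t1 <= slen s -> 0 <= t2 <= slen s ->
     spath s t1 = spath s t2 -> t1 = t2) /\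
  (forall t, 0 <= t <= slen s -> exists delta, 0 < delta /\
     forall a b, 0 <= a <= slen s -> 0 <= b <= slen s ->
       Rabs (a - t) < delta -> Rabs (b - t) < delta ->
       dist (spath s a) (spath s b) = Rabs (a - b)).

(** Trails in the (multi)graph whose edges are the segments of E:
    [trail E u v es] : the edge indices es form a walk from u to v. *)
Fixpoint trail {X : Type} (E : list (Seg X)) (u v : X) (es : list nat) : Prop :=
  match es with
  | nil => u = v
  | i :: es' => exists s w, nth_error E i = Some s /\
      ((spath s 0 = u /\ spath s (slen s) = w) \/
       (spath s 0 = w /\ spath s (slen s) = u)) /\
      trail E w v es'
  end.

Definition embedded_spanning_tree (X : MetricSpace) (C : list X) (E : list (Seg X)) : Prop :=
  (forall s, In s E -> straight_segment X C s) /\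
  (forall u v, In u C -> In v C -> exists es, trail E u v es) /\
  (forall (u : X) es, es <> nil -> NoDup es -> ~ trail E u u es) /\
  (forall i j si sj, i <> j -> nth_error E i = Some si -> nth_error E j = Some sj ->
     forall a b, 0 < a < slen si -> 0 < b < slen sj -> spath si a <> spath sj b).

(* Main.v *)
From Stdlib Require Import Reals Lra Lia List ZArith ClassicalEpsilon Classical.
From Stdlib Require Rtopology.
Require Import Defs.
Open Scope R_scope.

Lemma dist_refl (X : MetricSpace) (x : X) : dist x x = 0.
Proof. apply dist_sep; reflexivity. Qed.

Lemma dist_nonneg (X : MetricSpace) (x y : X) : 0 <= dist x y.
Proof.
  pose proof (dist_tri X x y x). rewrite dist_refl in H. rewrite (dist_sym X y x) in H. lra.
Qed.

Definition clusterR (u : nat -> R) (l : R) :=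
  forall eps, 0 < eps -> forall N, exists p, (N <= p)%nat /\ Rabs (u p - l) < eps.

Lemma clusterR_ex (u : nat -> R) : (forall n, -1 <= u n <= 1) -> exists l, clusterR u l.
Proof.
  intros H. destruct (Rtopology.Bolzano_Weierstrass u _ (Rtopology.compact_P3 (-1) 1) H) as [l Hl].
  exists l. intros eps He N.
  destruct (Hl (Rtopology.disc l (mkposreal eps He)) N) as [p [Hp1 Hp2]].
  - exists (mkposreal eps He). intros y Hy; exact Hy.
  - exists p; split; auto.
Qed.

Lemma inv_small (e : R) : 0 < e -> exists N, forall p, (N <= p)%nat -> / (INR p + 1) < e.
Proof.
  intros He. destruct (archimed_cor1 e He) as [N [H1 H2]]. exists N. intros p Hp.
  apply le_INR in Hp. apply lt_INR in H2. simpl in H2.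
  eapply Rle_lt_trans; [|exact H1]. apply Rinv_le_contravar; lra.
Qed.

Lemma subseq_ex (u : nat -> R) (l : R) : clusterR u l ->
  exists phi : nat -> nat, (forall k, (phi k < phi (S k))%nat) /\
     forall k, Rabs (u (phi k) - l) < / (INR k + 1).
Proof.
  intros H.
  assert (Hs : forall N k, exists p, (N <= p)%nat /\ Rabs (u p - l) < / (INR k + 1)).
  { intros N k. apply H. pose proof (pos_INR k). apply Rinv_0_lt_compat. lra. }
  assert (Hf : exists sel : nat -> nat -> nat, forall N k, (N <= sel N k)%nat /\ Rabs (u (sel N k) - l) < / (INR k + 1)).
  { exists (fun N k => proj1_sig (constructive_indefinite_description _ (Hs N k))).
    intros N k. exact (proj2_sig (constructive_indefinite_description _ (Hs N k))). }
  destruct Hf as [sel Hsel].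
  exists (fix phi k := match k with O => sel O O | S k' => sel (S (phi k')) (S k') end).
  split.
  - intros k. simpl. destruct (Hsel (S ((fix phi (k0 : nat) : nat :=
        match k0 with O => sel 0%nat 0%nat | S k' => sel (S (phi k')) (S k') end) k)) (S k)). lia.
  - intros k. destruct k; simpl; apply Hsel.
Qed.

Lemma phi_ge (phi : nat -> nat) : (forall k, (phi k < phi (S k))%nat) -> forall k, (k <= phi k)%nat.
Proof. intros H k. induction k. lia. specialize (H k). lia. Qed.

Lemma cluster3 (a b c : nat -> R) :
  (forall n, -1 <= a n <= 1) -> (forall n, -1 <= b n <= 1) -> (forall n, -1 <= c n <= 1) ->
  exists la lb lc, forall eps, 0 < eps -> forall N, exists p, (N <= p)%nat /\
    Rabs (a p - la) < eps /\ Rabs (b p - lb) < eps /\ Rabs (c p - lc) < eps.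
Proof.
  intros Ha Hb Hc.
  destruct (clusterR_ex a Ha) as [la Hla]. destruct (subseq_ex _ _ Hla) as [phi [Hphi1 Hphi2]].
  destruct (clusterR_ex (fun k => b (phi k))) as [lb Hlb]. { intros; apply Hb. }
  destruct (subseq_ex _ _ Hlb) as [psi [Hpsi1 Hpsi2]].
  destruct (clusterR_ex (fun k => c (phi (psi k)))) as [lc Hlc]. { intros; apply Hc. }
  exists la, lb, lc. intros eps He N.
  destruct (inv_small eps He) as [K HK].
  destruct (Hlc eps He (max N K)) as [p' [Hp' Hc']].
  exists (phi (psi p')). pose proof (phi_ge _ Hphi1 (psi p')). pose proof (phi_ge _ Hpsi1 p').
  split; [lia|]. split; [|split; auto].
  - eapply Rlt_trans; [apply Hphi2|]. apply HK. lia.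
  - eapply Rlt_trans; [apply (Hpsi2 p')|]. apply HK. lia.
Qed.
Definition clusterX {X : MetricSpace} (x : nat -> X) (z : X) :=
  forall eps, 0 < eps -> forall N, exists p, (N <= p)%nat /\ dist (x p) z < eps.

Definition c1 (p : R * R * R) := fst (fst p).
Definition c2 (p : R * R * R) := snd (fst p).
Definition c3 (p : R * R * R) := snd p.

Lemma dist3_eq p q : dist3 p q = sqrt ((c1 p - c1 q)^2 + (c2 p - c2 q)^2 + (c3 p - c3 q)^2).
Proof. destruct p as [[? ?] ?]; destruct q as [[? ?] ?]; reflexivity. Qed.

Lemma S2_eq (s : S2) : let p := proj1_sig s in c1 p * c1 p + c2 p * c2 p + c3 p * c3 p = 1.
Proof. destruct s as [[[a b] c] H]. exact H. Qed.

Lemma sq_diff_bound x y e : Rabs (x - y) < e -> Rabs y <= 1 -> e <= 1 ->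
  Rabs (x * x - y * y) <= 3 * e.
Proof.
  intros H1 H2 H3. replace (x*x - y*y) with ((x - y) * (x + y)) by ring.
  rewrite Rabs_mult. assert (Rabs (x + y) <= 3).
  { replace (x+y) with ((x - y) + 2*y) by ring. eapply Rle_trans; [apply Rabs_triang|].
    rewrite Rabs_mult, (Rabs_right 2) by lra. lra. }
  pose proof (Rabs_pos (x - y)). pose proof (Rabs_pos (x+y)). nra.
Qed.

Lemma sqrt3_small d1 d2 d3 e : 0 < e -> Rabs d1 < e/3 -> Rabs d2 < e/3 -> Rabs d3 < e/3 ->
  sqrt (d1^2 + d2^2 + d3^2) < e.
Proof.
  intros He H1 H2 H3. rewrite <- (sqrt_Rsqr e) by lra. apply sqrt_lt_1_alt. split.
  - nra.
  - unfold Rsqr. apply Rabs_def2 in H1. apply Rabs_def2 in H2. apply Rabs_def2 in H3.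
    assert (d1 * d1 < e * e / 9) by nra. assert (d2 * d2 < e * e / 9) by nra.
    assert (d3 * d3 < e * e / 9) by nra. nra.
Qed.

Lemma abs_le_1_of_sphere a b c : a * a + b * b + c * c = 1 -> -1 <= a <= 1.
Proof. intros H. assert (0 <= b*b) by nra. assert (0 <= c*c) by nra. split; nra. Qed.

Lemma X_compact (X : MetricSpace) : homeomorphic_to_S2 X ->
  forall x : nat -> X, exists z, clusterX x z.
Proof.
  intros [f [g [Hgf [Hfg [Hf Hg]]]]] x.
  set (P n := proj1_sig (f (x n))).
  assert (HP : forall n, c1 (P n) * c1 (P n) + c2 (P n) * c2 (P n) + c3 (P n) * c3 (P n) = 1).
  { intros n. apply S2_eq. }
  destruct (cluster3 (fun n => c1 (P n)) (fun n => c2 (P n)) (fun n => c3 (P n))) as [la [lb [lc Hl]]].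
  { intros n. specialize (HP n). eapply abs_le_1_of_sphere; exact HP. }
  { intros n. specialize (HP n). eapply (abs_le_1_of_sphere _ (c1 (P n)) (c3 (P n))); lra. }
  { intros n. specialize (HP n). eapply (abs_le_1_of_sphere _ (c1 (P n)) (c2 (P n))); lra. }
  assert (Hs : la * la + lb * lb + lc * lc = 1).
  { destruct (Req_dec (la * la + lb * lb + lc * lc) 1) as [|Hne]; auto. exfalso.
    set (e := Rmin 1 (Rabs (la * la + lb * lb + lc * lc - 1) / 18)).
    assert (Hpos : 0 < Rabs (la * la + lb * lb + lc * lc - 1)).
    { apply Rabs_pos_lt. lra. }
    assert (He : 0 < e). { unfold e. apply Rmin_pos; lra. }
    destruct (Hl e He O) as [p [_ [H1 [H2 H3]]]].
    specialize (HP p).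
    assert (B1 : -1 <= c1 (P p) <= 1) by (eapply abs_le_1_of_sphere; exact HP).
    assert (B2 : -1 <= c2 (P p) <= 1) by (eapply (abs_le_1_of_sphere _ (c1 (P p)) (c3 (P p))); lra).
    assert (B3 : -1 <= c3 (P p) <= 1) by (eapply (abs_le_1_of_sphere _ (c1 (P p)) (c2 (P p))); lra).
    assert (He1 : e <= 1) by (unfold e; apply Rmin_l).
    assert (He2 : e <= Rabs (la * la + lb * lb + lc * lc - 1) / 18) by (unfold e; apply Rmin_r).
    rewrite Rabs_minus_sym in H1, H2, H3.
    pose proof (sq_diff_bound la (c1 (P p)) e H1 ltac:(apply Rabs_le; lra) He1).
    pose proof (sq_diff_bound lb (c2 (P p)) e H2 ltac:(apply Rabs_le; lra) He1).
    pose proof (sq_diff_bound lc (c3 (P p)) e H3 ltac:(apply Rabs_le; lra) He1).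
    assert (Rabs (la * la + lb * lb + lc * lc - 1) <= 9 * e).
    { replace (la * la + lb * lb + lc * lc - 1) with
        ((la*la - c1 (P p) * c1 (P p)) + (lb*lb - c2 (P p) * c2 (P p)) + (lc*lc - c3 (P p) * c3 (P p))) by lra.
      eapply Rle_trans; [apply Rabs_triang|]. eapply Rle_trans; [apply Rplus_le_compat_r; apply Rabs_triang|]. lra. }
    lra. }
  set (s := exist (fun p : R * R * R => let '(a, b, c) := p in a * a + b * b + c * c = 1) (la, lb, lc) Hs : S2).
  exists (g s). intros eps He N.
  destruct (Hg s eps He) as [delta [Hd Hd2]].
  destruct (Hl (delta / 3) ltac:(lra) N) as [p [Hp [H1 [H2 H3]]]].
  exists p. split; auto. rewrite (dist_sym X). rewrite <- (Hgf (x p)). apply Hd2.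
  unfold distS2. rewrite dist3_eq. simpl. fold (P p).
  apply sqrt3_small; auto; rewrite Rabs_minus_sym; auto.
Qed.
Lemma choice_fun {A B : Type} (P : A -> B -> Prop) : (forall a, exists b, P a b) ->
  exists f : A -> B, forall a, P a (f a).
Proof.
  intros H. exists (fun a => proj1_sig (constructive_indefinite_description _ (H a))).
  intros a. exact (proj2_sig (constructive_indefinite_description _ (H a))).
Qed.

Lemma midpoint_ex (X : MetricSpace) : homeomorphic_to_S2 X -> intrinsic X ->
  forall x y : X, exists m, dist x m = dist x y / 2 /\ dist m y = dist x y / 2.
Proof.
  intros Hh Hi x y.
  assert (H : forall n : nat, exists z : X, dist x z <= dist x y / 2 + / (INR n + 1) /\
                                   dist z y <= dist x y / 2 + / (INR n + 1)).
  { intros n. apply Hi. pose proof (pos_INR n). apply Rinv_0_lt_compat. lra. }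
  destruct (choice_fun _ H) as [z Hz].
  destruct (X_compact X Hh z) as [m Hm]. exists m.
  assert (K : forall w, (forall n, dist w (z n) <= dist x y / 2 + / (INR n + 1)) -> dist w m <= dist x y / 2).
  { intros w Hw. destruct (Rle_dec (dist w m) (dist x y / 2)) as [|Hn]; auto. exfalso.
    set (e := dist w m - dist x y / 2). assert (He : 0 < e) by (unfold e; lra).
    destruct (inv_small (e/2) ltac:(lra)) as [N HN].
    destruct (Hm (e/2) ltac:(lra) N) as [p [Hp Hp2]].
    pose proof (dist_tri X w (z p) m). specialize (Hw p). specialize (HN p Hp). unfold e in *. lra. }
  assert (A1 : dist x m <= dist x y / 2) by (apply K; intros n; apply Hz).
  assert (A2 : dist y m <= dist x y / 2) by (apply K; intros n; rewrite dist_sym; apply Hz).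
  pose proof (dist_tri X x m y). rewrite (dist_sym X y m) in A2. split; lra.
Qed.
Fixpoint lev {X : Type} (mid : X -> X -> X) (p q : X) (n i : nat) : X :=
  match n with
  | O => match i with O => p | _ => q end
  | S n' => if Nat.odd i then mid (lev mid p q n' (Nat.div2 i)) (lev mid p q n' (S (Nat.div2 i)))
            else lev mid p q n' (Nat.div2 i)
  end.

Lemma lev_S {X : Type} mid (p q : X) n i : lev mid p q (S n) i =
  if Nat.odd i then mid (lev mid p q n (Nat.div2 i)) (lev mid p q n (S (Nat.div2 i)))
  else lev mid p q n (Nat.div2 i).
Proof. reflexivity. Qed.

Lemma lev_even {X : Type} mid (p q : X) n k : lev mid p q (S n) (2 * k) = lev mid p q n k.
Proof. rewrite lev_S. rewrite Nat.odd_even, Nat.div2_even. reflexivity. Qed.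

Lemma lev_odd {X : Type} mid (p q : X) n k :
  lev mid p q (S n) (2 * k + 1) = mid (lev mid p q n k) (lev mid p q n (S k)).
Proof. rewrite lev_S. rewrite Nat.odd_odd, Nat.div2_odd'. reflexivity. Qed.

Lemma chain_upper (X : MetricSpace) (Q : nat -> X) N h :
  (forall i, (i < N)%nat -> dist (Q i) (Q (S i)) <= h) ->
  forall j i, (i <= j <= N)%nat -> dist (Q i) (Q j) <= (INR j - INR i) * h.
Proof.
  intros H j. induction j; intros i Hij.
  - assert (i = 0%nat) by lia. subst. rewrite dist_refl. simpl. lra.
  - destruct (Nat.eq_dec i (S j)) as [->|Hne].
    + rewrite dist_refl. lra.
    + pose proof (dist_tri X (Q i) (Q j) (Q (S j))).
      pose proof (IHj i ltac:(lia)). pose proof (H j ltac:(lia)). rewrite S_INR. lra.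
Qed.

Lemma chain (X : MetricSpace) (Q : nat -> X) N h :
  (forall i, (i < N)%nat -> dist (Q i) (Q (S i)) <= h) ->
  INR N * h <= dist (Q 0%nat) (Q N) ->
  forall i j, (i <= j <= N)%nat -> dist (Q i) (Q j) = (INR j - INR i) * h.
Proof.
  intros H HN i j Hij. apply Rle_antisym.
  - apply chain_upper with N; auto.
  - pose proof (chain_upper X Q N h H i 0%nat ltac:(lia)).
    pose proof (chain_upper X Q N h H N j ltac:(lia)).
    pose proof (dist_tri X (Q 0%nat) (Q i) (Q N)).
    pose proof (dist_tri X (Q i) (Q j) (Q N)). simpl in *. lra.
Qed.

Lemma lev_props (X : MetricSpace) (mid : X -> X -> X) (p q : X) :
  (forall x y, dist x (mid x y) = dist x y / 2 /\ dist (mid x y) y = dist x y / 2) ->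
  forall n, lev mid p q n 0 = p /\ lev mid p q n (2 ^ n) = q /\
    forall i j, (i <= j <= 2 ^ n)%nat ->
      dist (lev mid p q n i) (lev mid p q n j) = (INR j - INR i) * (dist p q / 2 ^ n).
Proof.
  intros Hm n. induction n as [|n [IH0 [IH1 IH2]]].
  - simpl. split; auto. split; auto. intros i j Hij.
    destruct i as [|[|i]]; destruct j as [|[|j]]; try lia; simpl; rewrite ?dist_refl; try lra.
  - assert (E0 : lev mid p q (S n) 0 = p). { transitivity (lev mid p q n 0); [exact (lev_even mid p q n 0) | exact IH0]. }
    assert (E1 : lev mid p q (S n) (2 ^ S n) = q).
    { transitivity (lev mid p q n (2 ^ n)); [|exact IH1]. rewrite Nat.pow_succ_r'. apply lev_even. }
    split; auto. split; auto.
    apply chain.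
    + intros i Hi. pose proof (Nat.div2_odd i) as Hd.
      set (k := Nat.div2 i) in *. rewrite Nat.pow_succ_r' in Hi.
      destruct (Nat.odd i); simpl Nat.b2n in Hd.
      * assert (S i = 2 * S k)%nat by lia. rewrite H, Hd, lev_odd, lev_even.
        destruct (Hm (lev mid p q n k) (lev mid p q n (S k))) as [_ ->].
        rewrite IH2 by lia. rewrite S_INR; simpl pow. right. field. apply pow_nonzero; lra.
      * rewrite Nat.add_0_r in Hd. assert (S i = 2 * k + 1)%nat by lia. rewrite H, Hd, lev_odd, lev_even.
        destruct (Hm (lev mid p q n k) (lev mid p q n (S k))) as [-> _].
        rewrite IH2 by lia. rewrite S_INR; simpl pow. right. field. apply pow_nonzero; lra.
    + rewrite E0, E1. rewrite pow_INR. simpl INR. replace (1+1) with 2 by lra. right. field. apply pow_nonzero; lra.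
Qed.

Lemma lev_pair (X : MetricSpace) (mid : X -> X -> X) (p q : X) :
  (forall x y, dist x (mid x y) = dist x y / 2 /\ dist (mid x y) y = dist x y / 2) ->
  forall n i j, (i <= 2 ^ n)%nat -> (j <= 2 ^ n)%nat ->
      dist (lev mid p q n i) (lev mid p q n j) = Rabs (INR i - INR j) * (dist p q / 2 ^ n).
Proof.
  intros Hm n i j Hi Hj.
  destruct (Compare_dec.le_lt_dec i j).
  - rewrite (proj2 (proj2 (lev_props X mid p q Hm n))) by lia.
    rewrite Rabs_minus_sym, Rabs_right. auto. apply le_INR in l. lra.
  - rewrite dist_sym, (proj2 (proj2 (lev_props X mid p q Hm n))) by lia.
    rewrite Rabs_right. auto. apply lt_INR in l. lra.
Qed.

Lemma lev_cons {X : Type} mid (p q : X) k n i : lev mid p q (k + n) (i * 2 ^ k) = lev mid p q n i.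
Proof.
  induction k.
  - simpl. rewrite Nat.mul_1_r. reflexivity.
  - replace (i * 2 ^ S k)%nat with (2 * (i * 2 ^ k))%nat by (rewrite Nat.pow_succ_r'; lia).
    simpl plus. rewrite lev_even. exact IHk.
Qed.
Lemma pow2_gt n : INR n < 2 ^ n.
Proof. induction n. simpl. lra. rewrite S_INR. simpl. assert (1 <= 2 ^ n) by (apply pow_R1_Rle; lra). lra. Qed.

Lemma hsmall (D e : R) : 0 < e -> exists N, forall m, (N <= m)%nat -> D / 2 ^ m < e.
Proof.
  intros He. destruct (archimed_cor1 (e / (Rabs D + 1))) as [N [HN HN0]].
  { apply Rdiv_lt_0_compat; auto. pose proof (Rabs_pos D). lra. }
  exists N. intros m Hm. pose proof (Rabs_pos D).
  assert (P : INR N <= INR m) by (apply le_INR; auto).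
  pose proof (pow2_gt m). assert (0 < INR N).
  { apply lt_0_INR. lia. }
  assert (Hp : 0 < 2 ^ m) by (apply pow_lt; lra).
  apply Rle_lt_trans with ((Rabs D + 1) / 2 ^ m).
  - unfold Rdiv. apply Rmult_le_compat_r. left; apply Rinv_0_lt_compat; auto. pose proof (Rle_abs D). lra.
  - apply Rlt_le_trans with ((Rabs D + 1) / INR N).
    + unfold Rdiv. apply Rmult_lt_compat_l. lra. apply Rinv_lt_contravar. nra. lra.
    + assert (/ INR N < e / (Rabs D + 1)) by exact HN.
      apply Rmult_lt_compat_l with (r := Rabs D + 1) in H2; [|lra].
      unfold Rdiv in *. replace ((Rabs D + 1) * (e * / (Rabs D + 1))) with e in H2 by (field; lra). lra.
Qed.

Lemma zero_of_small (D x : R) : 0 <= D -> (forall n, Rabs x <= 4 * (D / 2 ^ n)) -> x = 0.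
Proof.
  intros HD H. destruct (Req_dec x 0); auto. exfalso.
  assert (Hx : 0 < Rabs x) by (apply Rabs_pos_lt; auto).
  destruct (hsmall (4 * D) (Rabs x) Hx) as [N HN]. specialize (HN N (le_n _)). specialize (H N).
  unfold Rdiv in *. lra.
Qed.

Lemma idx_ex (D t : R) n : 0 < D -> 0 <= t <= D ->
  exists i, (i <= 2 ^ n)%nat /\ Rabs (INR i * (D / 2 ^ n) - t) <= D / 2 ^ n.
Proof.
  intros HD Ht. assert (Hp : 0 < 2 ^ n) by (apply pow_lt; lra).
  set (h := D / 2 ^ n). assert (Hh : 0 < h) by (unfold h; apply Rdiv_lt_0_compat; lra).
  set (x := t / h). destruct (base_Int_part x) as [B1 B2].
  assert (Hx0 : 0 <= x) by (unfold x; apply Rmult_le_pos; [lra| left; apply Rinv_0_lt_compat; lra]).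
  assert (Hx1 : x <= 2 ^ n).
  { unfold x, h. unfold Rdiv. rewrite Rinv_mult, Rinv_inv. apply Rmult_le_reg_r with (/ D).
    apply Rinv_0_lt_compat; lra. replace (t * (/ D * 2 ^ n) * / D) with (t / D * (2^n / D)) by (field; lra).
    apply Rle_trans with (1 * (2 ^ n / D)). apply Rmult_le_compat_r. unfold Rdiv. apply Rmult_le_pos; [lra|left; apply Rinv_0_lt_compat; lra].
    unfold Rdiv. apply Rmult_le_reg_r with D; auto. rewrite Rmult_assoc, Rinv_l by lra. lra. right; field; lra. }
  assert (Hz : (0 <= Int_part x)%Z). { assert (-1 < IZR (Int_part x)) by lra. apply lt_IZR in H. lia. }
  exists (Z.to_nat (Int_part x)).
  assert (Hi : INR (Z.to_nat (Int_part x)) = IZR (Int_part x)).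
  { rewrite INR_IZR_INZ, Z2Nat.id; auto. }
  split.
  - apply INR_le. rewrite Hi, pow_INR. simpl INR. replace (1+1) with 2 by lra. lra.
  - rewrite Hi. replace (IZR (Int_part x) * h - t) with (h * (IZR (Int_part x) - x)) by (unfold x; field; lra).
    rewrite Rabs_mult, (Rabs_right h) by lra. rewrite <- (Rmult_1_r h) at 2.
    apply Rmult_le_compat_l. lra. split_Rabs; lra.
Qed.

Lemma lev_close (X : MetricSpace) (mid : X -> X -> X) (p q : X) t :
  (forall x y, dist x (mid x y) = dist x y / 2 /\ dist (mid x y) y = dist x y / 2) ->
  forall n m i j, (n <= m)%nat -> (i <= 2 ^ n)%nat -> (j <= 2 ^ m)%nat ->
  Rabs (INR i * (dist p q / 2 ^ n) - t) <= dist p q / 2 ^ n ->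
  Rabs (INR j * (dist p q / 2 ^ m) - t) <= dist p q / 2 ^ m ->
  dist (lev mid p q n i) (lev mid p q m j) <= dist p q / 2 ^ n + dist p q / 2 ^ m.
Proof.
  intros Hm n m i j Hnm Hi Hj H1 H2.
  rewrite <- (lev_cons mid p q (m - n) n i). replace (m - n + n)%nat with m by lia.
  assert (Hle : (i * 2 ^ (m - n) <= 2 ^ m)%nat).
  { replace (2 ^ m)%nat with (2 ^ n * 2 ^ (m - n))%nat. apply Nat.mul_le_mono_r; auto.
    rewrite <- Nat.pow_add_r. f_equal. lia. }
  rewrite lev_pair; auto.
  assert (E : INR (i * 2 ^ (m - n)) * (dist p q / 2 ^ m) = INR i * (dist p q / 2 ^ n)).
  { rewrite mult_INR, pow_INR. simpl INR. replace (1+1) with 2 by lra.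
    replace (2 ^ m) with (2 ^ (m - n) * 2 ^ n). field. split; apply pow_nonzero; lra.
    rewrite <- pow_add. f_equal. lia. }
  assert (0 < 2 ^ m) by (apply pow_lt; lra).
  pose proof (dist_nonneg X p q).
  assert (Hh : 0 <= dist p q / 2 ^ m) by (apply Rmult_le_pos; [lra|left; apply Rinv_0_lt_compat; lra]).
  replace (Rabs (INR (i * 2 ^ (m - n)) - INR j) * (dist p q / 2 ^ m))
    with (Rabs (INR (i * 2 ^ (m - n)) * (dist p q / 2 ^ m) - INR j * (dist p q / 2 ^ m))).
  - rewrite E. split_Rabs; lra.
  - rewrite <- Rmult_minus_distr_r, Rabs_mult, (Rabs_right (dist p q / 2 ^ m)); lra.
Qed.
Lemma four_pt (X : MetricSpace) (A B P Q : X) :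
  dist A B <= dist P A + dist P Q + dist Q B /\ dist P Q <= dist P A + dist A B + dist Q B.
Proof.
  pose proof (dist_tri X A P B). pose proof (dist_tri X P Q B). pose proof (dist_tri X P A Q).
  pose proof (dist_tri X A B Q). rewrite (dist_sym X A P) in *. rewrite (dist_sym X B Q) in *. split; lra.
Qed.

Definition isom {X : MetricSpace} (g : R -> X) (L : R) :=
  forall a b, 0 <= a <= L -> 0 <= b <= L -> dist (g a) (g b) = Rabs (a - b).

Lemma geodesic_ex (X : MetricSpace) : homeomorphic_to_S2 X -> intrinsic X ->
  forall p q : X, p <> q -> exists g : R -> X, g 0 = p /\ g (dist p q) = q /\ isom g (dist p q).
Proof.
  intros Hh Hi p q Hpq.
  destruct (choice_fun (fun (xy : X * X) m => dist (fst xy) m = dist (fst xy) (snd xy) / 2 /\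
              dist m (snd xy) = dist (fst xy) (snd xy) / 2)) as [mid0 Hmid0].
  { intros [x y]. apply midpoint_ex; auto. }
  set (mid := fun x y => mid0 (x, y)).
  assert (Hm : forall x y, dist x (mid x y) = dist x y / 2 /\ dist (mid x y) y = dist x y / 2).
  { intros x y. exact (Hmid0 (x, y)). }
  set (D := dist p q).
  assert (HD : 0 < D).
  { pose proof (dist_nonneg X p q). destruct (Req_dec D 0) as [E|]. apply dist_sep in E. contradiction. unfold D in *; lra. }
  set (h := fun n : nat => D / 2 ^ n).
  assert (Hh0 : forall n, 0 < h n) by (intros n; unfold h; apply Rdiv_lt_0_compat; [lra|apply pow_lt; lra]).
  assert (Hpt : forall t, exists z, 0 <= t <= D -> forall n i, (i <= 2 ^ n)%nat ->
            Rabs (INR i * h n - t) <= h n -> dist (lev mid p q n i) z <= h n).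
  { intros t. destruct (Rle_dec 0 t) as [Ht0|Ht0]; [destruct (Rle_dec t D) as [Ht1|Ht1]|].
    2,3: exists p; intros; lra.
    destruct (choice_fun (fun n i => (i <= 2 ^ n)%nat /\ Rabs (INR i * h n - t) <= h n)) as [ind Hind].
    { intros n. apply idx_ex; auto. }
    destruct (X_compact X Hh (fun n => lev mid p q n (ind n))) as [z Hz].
    exists z. intros _ n i Hii Hit.
    destruct (Rle_dec (dist (lev mid p q n i) z) (h n)) as [|Hn]; auto. exfalso.
    set (e := dist (lev mid p q n i) z - h n).
    assert (He : 0 < e) by (unfold e; lra).
    destruct (hsmall D (e/2) ltac:(lra)) as [N HN].
    destruct (Hz (e/2) ltac:(lra) (max N n)) as [k [Hk Hk2]].
    assert (C : dist (lev mid p q n i) (lev mid p q k (ind k)) <= h n + h k).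
    { apply lev_close with t; auto; try lia; apply Hind. }
    pose proof (HN k ltac:(lia)).
    pose proof (dist_tri X (lev mid p q n i) (lev mid p q k (ind k)) z). unfold e in *; unfold h in *. lra. }
  destruct (choice_fun _ Hpt) as [g Hg].
  assert (Hp : forall n, (lev mid p q n 0 = p)) by (intros n; apply (lev_props X mid p q Hm n)).
  assert (Hq : forall n, (lev mid p q n (2 ^ n) = q)) by (intros n; apply (lev_props X mid p q Hm n)).
  exists g. split; [|split].
  - apply dist_sep. apply (zero_of_small D); [lra|]. intros n.
    specialize (Hg 0 ltac:(lra) n 0%nat ltac:(lia)). rewrite Hp in Hg.
    rewrite Rabs_right by apply Rle_ge, dist_nonneg. pose proof (Hh0 n). unfold h in *.
    rewrite dist_sym. assert (dist p (g 0) <= D / 2 ^ n). apply Hg. simpl. rewrite Rmult_0_l, Rminus_0_r, Rabs_R0. lra. lra.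
  - apply dist_sep. apply (zero_of_small D); [lra|]. intros n.
    specialize (Hg D ltac:(lra) n (2 ^ n)%nat (le_n _)). rewrite Hq in Hg.
    rewrite Rabs_right by apply Rle_ge, dist_nonneg. pose proof (Hh0 n). unfold h in *.
    rewrite dist_sym. assert (dist q (g D) <= D / 2 ^ n). apply Hg.
    rewrite pow_INR. simpl INR. replace (1+1) with 2 by lra.
    replace (2 ^ n * (D / 2 ^ n) - D) with 0 by (field; apply pow_nonzero; lra). rewrite Rabs_R0. lra. lra.
  - intros a b Ha Hb. apply Rminus_diag_uniq. apply (zero_of_small D); [lra|]. intros n.
    destruct (idx_ex D a n HD Ha) as [ia [Hia1 Hia2]].
    destruct (idx_ex D b n HD Hb) as [ib [Hib1 Hib2]].
    pose proof (Hg a Ha n ia Hia1 Hia2). pose proof (Hg b Hb n ib Hib1 Hib2).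
    pose proof (lev_pair X mid p q Hm n ia ib Hia1 Hib1). fold D in H1.
    destruct (four_pt X (g a) (g b) (lev mid p q n ia) (lev mid p q n ib)) as [H2 H4].
    pose proof (Hh0 n). unfold h in *.
    assert (Rabs (INR ia - INR ib) * (D / 2 ^ n) = Rabs (INR ia * (D / 2 ^ n) - INR ib * (D / 2 ^ n))).
    { rewrite <- Rmult_minus_distr_r, Rabs_mult, (Rabs_right (D / 2 ^ n)); lra. }
    rewrite H5 in H1. clear H5. set (hh := D / 2 ^ n) in *.
    pose proof (dist_nonneg X (g a) (g b)).
    split_Rabs; lra.
Qed.
Lemma angsep_bounds alpha t1 t2 : 0 < alpha -> 0 <= angsep alpha t1 t2 <= alpha / 2.
Proof.
  intros Ha. unfold angsep. set (d := t1 - t2). destruct (base_Int_part (d / alpha)) as [B1 B2].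
  set (I := IZR (Int_part (d / alpha))) in *.
  assert (alpha * I <= d).
  { apply Rmult_le_compat_l with (r := alpha) in B1; [|lra]. unfold Rdiv in B1.
    rewrite <- Rmult_assoc, (Rmult_comm alpha d), Rmult_assoc, Rinv_r, Rmult_1_r in B1; lra. }
  assert (d - alpha < alpha * I).
  { assert (I > d / alpha - 1) by lra. apply Rmult_lt_compat_l with (r := alpha) in H0; [|lra].
    unfold Rdiv in H0. rewrite Rmult_minus_distr_l, <- Rmult_assoc, (Rmult_comm alpha d), Rmult_assoc, Rinv_r, Rmult_1_r in H0; lra. }
  apply Rmin_case_strong; intros; lra.
Qed.

Lemma cone_dist_apex alpha t r t' : 0 <= r -> cone_dist alpha (0, t) (r, t') = r.
Proof.
  intros Hr. unfold cone_dist. simpl fst; simpl snd. destruct (Rlt_dec _ PI).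
  - replace (0 ^ 2 + r ^ 2 - 2 * 0 * r * cos (angsep alpha t t')) with (r * r) by ring.
    apply sqrt_square; auto.
  - lra.
Qed.

Lemma no_cone (X : MetricSpace) (C : list X) : flat_cone_sphere X C ->
  forall g L, isom g L -> forall t, 0 < t < L -> ~ In (g t) C.
Proof.
  intros [_ [_ [_ [_ HC]]]] g L Hg t Ht Hin.
  destruct (HC _ Hin) as [theta [Hth [eps [f [He [Hf0 [Hfpos [Hfiso _]]]]]]]].
  set (s := Rmin (eps / 2) (Rmin (t / 2) ((L - t) / 2))).
  assert (Hs : 0 < s /\ s < eps /\ s <= t / 2 /\ s <= (L - t) / 2).
  { unfold s. repeat apply Rmin_case_strong; intros; lra. }
  assert (D1 : dist (g t) (g (t - s)) = s). { rewrite Hg by lra. rewrite Rabs_right; lra. }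
  assert (D2 : dist (g t) (g (t + s)) = s). { rewrite Hg by lra. rewrite Rabs_left; lra. }
  assert (D3 : dist (g (t - s)) (g (t + s)) = 2 * s). { rewrite Hg by lra. rewrite Rabs_left; lra. }
  set (alpha := 2 * PI - theta) in *.
  pose proof (Hfiso (g t) (g (t - s)) ltac:(rewrite dist_refl; lra) ltac:(lra)) as E1.
  pose proof (Hfiso (g t) (g (t + s)) ltac:(rewrite dist_refl; lra) ltac:(lra)) as E2.
  pose proof (Hfiso (g (t - s)) (g (t + s)) ltac:(lra) ltac:(lra)) as E3.
  pose proof (Hfpos (g (t - s)) ltac:(lra)) as P1.
  pose proof (Hfpos (g (t + s)) ltac:(lra)) as P2.
  destruct (f (g t)) as [c0 ct] eqn:Ec. simpl in Hf0. subst c0.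
  destruct (f (g (t - s))) as [r1 t1] eqn:E1'. destruct (f (g (t + s))) as [r2 t2] eqn:E2'.
  simpl in P1, P2. rewrite cone_dist_apex in E1, E2 by auto.
  assert (Hr1 : r1 = s) by lra. assert (Hr2 : r2 = s) by lra. rewrite Hr1, Hr2 in E3.
  rewrite D3 in E3. unfold cone_dist in E3. simpl fst in E3. simpl snd in E3.
  assert (Ha : 0 < alpha) by (unfold alpha; lra).
  destruct (angsep_bounds alpha t1 t2 Ha) as [A1 A2].
  set (phi := angsep alpha t1 t2) in *.
  destruct (Rlt_dec phi PI) as [Hlt|Hge]; [|unfold alpha in A2; lra].
  assert (Hc : cos PI < cos phi) by (apply cos_decreasing_1; lra).
  rewrite cos_PI in Hc.
  set (x := s ^ 2 + s ^ 2 - 2 * s * s * cos phi) in *.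
  assert (Hx : 0 <= x).
  { destruct (Rle_dec 0 x) as [|Hn]; auto. apply Rnot_le_lt in Hn. rewrite sqrt_neg_0 in E3 by lra. destruct Hs; lra. }
  pose proof (sqrt_sqrt x Hx). rewrite E3 in H. unfold x in H.
  assert (0 < s * s) by nra. nra.
Qed.
Lemma sqrt_eq_sq x k : 0 <= x -> sqrt x = k -> x = k * k.
Proof. intros Hx H. rewrite <- H. symmetry. apply sqrt_sqrt; auto. Qed.

Lemma plane_reflect (A Y B : R * R) k :
  dist2 Y A = k -> dist2 Y B = k -> dist2 A B = 2 * k ->
  B = (2 * fst Y - fst A, 2 * snd Y - snd A).
Proof.
  destruct A as [a1 a2], Y as [y1 y2], B as [b1 b2]. unfold dist2; simpl fst; simpl snd.
  intros H1 H2 H3.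
  apply sqrt_eq_sq in H1; [|apply Rplus_le_le_0_compat; apply pow2_ge_0].
  apply sqrt_eq_sq in H2; [|apply Rplus_le_le_0_compat; apply pow2_ge_0].
  apply sqrt_eq_sq in H3; [|apply Rplus_le_le_0_compat; apply pow2_ge_0].
  assert (E : (a1 - y1 + (b1 - y1)) ^ 2 + (a2 - y2 + (b2 - y2)) ^ 2 = 0).
  { replace ((a1 - y1 + (b1 - y1)) ^ 2 + (a2 - y2 + (b2 - y2)) ^ 2) with
      (2 * ((y1 - a1) ^ 2 + (y2 - a2) ^ 2) + 2 * ((y1 - b1) ^ 2 + (y2 - b2) ^ 2) - ((a1 - b1) ^ 2 + (a2 - b2) ^ 2)) by ring.
    rewrite H1, H2, H3. ring. }
  pose proof (pow2_ge_0 (a1 - y1 + (b1 - y1))). pose proof (pow2_ge_0 (a2 - y2 + (b2 - y2))).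
  assert (Z1 : (a1 - y1 + (b1 - y1)) ^ 2 = 0) by lra. assert (Z2 : (a2 - y2 + (b2 - y2)) ^ 2 = 0) by lra.
  assert (W1 : a1 - y1 + (b1 - y1) = 0) by (destruct (Req_dec (a1 - y1 + (b1 - y1)) 0); auto; exfalso; apply (pow_nonzero _ 2 H4 Z1)).
  assert (W2 : a2 - y2 + (b2 - y2) = 0) by (destruct (Req_dec (a2 - y2 + (b2 - y2)) 0); auto; exfalso; apply (pow_nonzero _ 2 H4 Z2)).
  f_equal; lra.
Qed.

Lemma nb_up (X : MetricSpace) (C : list X) : flat_cone_sphere X C ->
  forall (g1 g2 : R -> X) L t, isom g1 L -> isom g2 L -> 0 < t <= L ->
  (forall u, 0 <= u <= t -> g1 u = g2 u) -> forall u, 0 <= u <= L -> g1 u = g2 u.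
Proof.
  intros HX g1 g2 L t H1 H2 Ht Hag.
  set (E := fun s => 0 <= s <= L /\ forall u, 0 <= u <= s -> g1 u = g2 u).
  destruct (completeness E) as [m [Hub Hlub]].
  { exists L. intros s Hs. apply Hs. }
  { exists t. split; auto; lra. }
  assert (Htm : t <= m) by (apply Hub; split; auto; lra).
  assert (HmL : m <= L) by (apply Hlub; intros s Hs; apply Hs).
  assert (A : forall u, 0 <= u < m -> g1 u = g2 u).
  { intros u Hu. destruct (classic (exists s, E s /\ u < s)) as [[s [Hs1 Hs2]]|Hn].
    - apply Hs1; lra.
    - exfalso. assert (m <= u); [|lra]. apply Hlub. intros s Hs.
      destruct (Rle_dec s u) as [|Hsu]; auto. exfalso. apply Hn. exists s. split; auto. lra. }
  assert (B : g1 m = g2 m).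
  { apply dist_sep. destruct (Req_dec (dist (g1 m) (g2 m)) 0) as [|Hne]; auto. exfalso.
    pose proof (dist_nonneg X (g1 m) (g2 m)).
    set (d := dist (g1 m) (g2 m)) in *.
    set (del := Rmin m (d / 4)).
    assert (0 < del /\ del <= m /\ del <= d / 4) by (unfold del; apply Rmin_case_strong; intros; lra).
    pose proof (A (m - del) ltac:(lra)).
    pose proof (dist_tri X (g1 m) (g1 (m - del)) (g2 m)).
    pose proof (dist_tri X (g1 (m - del)) (g2 (m - del)) (g2 m)).
    assert (Q1 : dist (g1 m) (g1 (m - del)) = del).
    { rewrite H1 by lra. replace (m - (m - del)) with del by ring. rewrite Rabs_right; lra. }
    assert (Q2 : dist (g2 (m - del)) (g2 m) = del).
    { rewrite H2 by lra. replace (m - del - m) with (- del) by ring. rewrite Rabs_Ropp, Rabs_right; lra. }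
    rewrite Q1 in H4. rewrite H3, dist_refl, Q2 in H5. rewrite H3 in H4. fold d in H4. lra. }
  assert (Em : forall u, 0 <= u <= m -> g1 u = g2 u).
  { intros u Hu. destruct (Req_dec u m). subst; auto. apply A; lra. }
  destruct (Req_dec m L) as [->|HmL']. { exact Em. }
  exfalso.
  assert (Hy : ~ In (g1 m) C) by (apply (no_cone X C HX g1 L H1); lra).
  destruct HX as [_ [_ [_ [HE _]]]].
  destruct (HE _ Hy) as [eps [f [He [Hiso _]]]].
  set (h := Rmin (eps / 2) (Rmin (m / 2) ((L - m) / 2))).
  assert (Hh : 0 < h /\ h < eps /\ h <= m / 2 /\ h <= (L - m) / 2).
  { unfold h. repeat apply Rmin_case_strong; intros; lra. }
  assert (Hm : m + h <= m); [|lra].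
  apply Hub. split; [lra|]. intros u Hu.
  destruct (Rle_dec u m) as [|Hum]. { apply Em; lra. }
  set (k := u - m).
  assert (Hk : 0 < k <= h) by (unfold k; lra).
  replace u with (m + k) by (unfold k; ring).
  assert (Ea : g1 (m - k) = g2 (m - k)) by (apply A; lra).
  assert (R1 : forall g : R -> X, isom g L -> g m = g1 m ->
     f (g (m + k)) = (2 * fst (f (g1 m)) - fst (f (g (m - k))), 2 * snd (f (g1 m)) - snd (f (g (m - k))))).
  { intros g Hg Hgm. apply plane_reflect with k.
    - rewrite Hiso. rewrite <- Hgm, Hg by lra. rewrite Rabs_right; lra.
      rewrite dist_refl; lra. rewrite <- Hgm, Hg by lra. rewrite Rabs_right; lra.
    - rewrite Hiso. rewrite <- Hgm, Hg by lra. rewrite Rabs_left; lra.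
      rewrite dist_refl; lra. rewrite <- Hgm, Hg by lra. rewrite Rabs_left; lra.
    - rewrite Hiso. rewrite Hg by lra. rewrite Rabs_left; lra.
      rewrite <- Hgm, Hg by lra. rewrite Rabs_right; lra.
      rewrite <- Hgm, Hg by lra. rewrite Rabs_left; lra. }
  pose proof (R1 g1 H1 eq_refl) as F1. pose proof (R1 g2 H2 (eq_sym B)) as F2.
  rewrite <- Ea in F2. rewrite <- F2 in F1.
  apply dist_sep. rewrite <- Hiso.
  - rewrite F1. unfold dist2. rewrite !Rminus_diag. replace (0 ^ 2 + 0 ^ 2) with 0 by ring. apply sqrt_0.
  - rewrite H1 by lra. rewrite Rabs_left; lra.
  - rewrite B, H2 by lra. rewrite Rabs_left; lra.
Qed.
Lemma isom_restrict (X : MetricSpace) (g : R -> X) L m : isom g L -> m <= L -> isom g m.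
Proof. intros H Hm a b Ha Hb. apply H; lra. Qed.

Lemma concat_isom (X : MetricSpace) (gb gc : R -> X) Lb Lc t :
  isom gb Lb -> isom gc Lc -> gb 0 = gc 0 -> gb t = gc t -> 0 <= t -> t <= Lb -> t <= Lc ->
  isom (fun s => if Rle_dec s t then gb s else gc s) Lc.
Proof.
  intros Hb Hc H0 Ht Ht0 Htb Htc.
  assert (M : forall a b, 0 <= a <= t -> t < b <= Lc -> dist (gb a) (gc b) = Rabs (a - b)).
  { intros a b Ha Hb'. rewrite Rabs_left by lra. apply Rle_antisym.
    - pose proof (dist_tri X (gb a) (gb t) (gc b)). rewrite Hb in H by lra.
      rewrite Ht, Hc in H by lra. rewrite (Rabs_left1 (a - t)) in H by lra.
      rewrite (Rabs_left1 (t - b)) in H by lra. lra.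
    - pose proof (dist_tri X (gb 0) (gb a) (gc b)). rewrite Hb in H by lra.
      rewrite H0, Hc in H by lra. rewrite Rabs_left1 in H by lra. rewrite Rabs_left1 in H by lra. lra. }
  intros a b Ha Hb'.
  destruct (Rle_dec a t); destruct (Rle_dec b t).
  - apply Hb; lra.
  - apply M; lra.
  - rewrite dist_sym, Rabs_minus_sym. apply M; lra.
  - apply Hc; lra.
Qed.

Lemma star_geo (X : MetricSpace) (C : list X) : flat_cone_sphere X C ->
  forall (r b c : X) (gb gc : R -> X) Lb Lc,
  gb 0 = r -> gb Lb = b -> isom gb Lb -> gc 0 = r -> gc Lc = c -> isom gc Lc ->
  In b C -> In c C -> b <> c ->
  forall x y, 0 < x < Lb -> 0 < y < Lc -> gb x <> gc y.
Proof.
  intros HX r b c gb gc Lb Lc Hb0 HbL Hb Hc0 HcL Hc Inb Inc Hbc x y Hx Hy Hxy.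
  assert (Ex : dist r (gb x) = x). { rewrite <- Hb0, Hb by lra. rewrite Rabs_left; lra. }
  assert (Ey : dist r (gc y) = y). { rewrite <- Hc0, Hc by lra. rewrite Rabs_left; lra. }
  rewrite Hxy in Ex. assert (x = y) by lra. subst y. set (t := x) in *.
  set (eta := fun s => if Rle_dec s t then gb s else gc s).
  assert (He : isom eta Lc) by (apply concat_isom with Lb; auto; try lra; congruence).
  set (m := Rmin Lb Lc).
  assert (Hm : m <= Lb /\ m <= Lc /\ t < m) by (unfold m; apply Rmin_case_strong; intros; lra).
  assert (Agree : forall u, 0 <= u <= m -> gb u = eta u).
  { destruct Hm as [Hm1 [Hm2 Hm3]].
    apply (nb_up X C HX gb eta m t (isom_restrict X gb Lb m Hb Hm1) (isom_restrict X eta Lc m He Hm2)). lra.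
    intros u Hu. unfold eta. destruct (Rle_dec u t); [reflexivity|lra]. }
  assert (Ec : forall u, t < u <= m -> gb u = gc u).
  { intros u Hu. rewrite Agree by lra. unfold eta. destruct (Rle_dec u t); [lra|reflexivity]. }
  destruct (Rlt_dec Lb Lc) as [H1|H1]; [|destruct (Rlt_dec Lc Lb) as [H2|H2]].
  - assert (m = Lb) by (unfold m; apply Rmin_left; lra).
    apply (no_cone X C HX gc Lc Hc Lb ltac:(lra)). rewrite <- Ec by lra. rewrite HbL. exact Inb.
  - assert (m = Lc) by (unfold m; apply Rmin_right; lra).
    apply (no_cone X C HX gb Lb Hb Lc ltac:(lra)). rewrite Ec by lra. rewrite HcL. exact Inc.
  - assert (Lb = Lc) by lra. assert (m = Lb) by (unfold m; apply Rmin_left; lra).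
    apply Hbc. rewrite <- HbL, <- HcL. rewrite Ec by lra. congruence.
Qed.
Lemma nth_map_inv {X : Type} (sg : X -> Seg X) (L : list X) i s :
  nth_error (map sg L) i = Some s -> exists b, nth_error L i = Some b /\ s = sg b.
Proof.
  rewrite nth_error_map. destruct (nth_error L i) as [b|] eqn:E; simpl; intros H; inversion H.
  exists b; auto.
Qed.

Lemma nodup_idx {X : Type} (L : list X) i j v :
  NoDup L -> nth_error L i = Some v -> nth_error L j = Some v -> i = j.
Proof.
  intros HN Hi Hj. apply (proj1 (NoDup_nth_error L) HN).
  - apply nth_error_Some. congruence.
  - congruence.
Qed.

Lemma step_end {X : Type} (r : X) (L : list X) (sg : X -> Seg X) i s w w' :
  (forall b, In b L -> spath (sg b) 0 = r /\ spath (sg b) (slen (sg b)) = b) ->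
  nth_error (map sg L) i = Some s ->
  ((spath s 0 = w /\ spath s (slen s) = w') \/ (spath s 0 = w' /\ spath s (slen s) = w)) ->
  w <> r -> nth_error L i = Some w /\ w' = r.
Proof.
  intros Hend Hs Hst Hw. destruct (nth_map_inv sg L i s Hs) as [b [Hb ->]].
  destruct (Hend b (nth_error_In _ _ Hb)) as [E0 E1].
  destruct Hst as [[A1 A2]|[A1 A2]].
  - congruence.
  - split; congruence.
Qed.

Lemma reach {X : Type} (r : X) (L : list X) (sg : X -> Seg X) :
  (forall b, In b L -> spath (sg b) 0 = r /\ spath (sg b) (slen (sg b)) = b) ->
  forall es w v, trail (map sg L) w v es -> w <> v -> v <> r ->
  exists j, In j es /\ nth_error L j = Some v.
Proof.
  intros Hend es. induction es as [|i es IH]; intros w v Htr Hwv Hv.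
  - simpl in Htr. contradiction.
  - destruct Htr as [s [w' [Hs [Hst Htr]]]].
    destruct (classic (w' = v)) as [->|Hne].
    + exists i. split; [left; auto|].
      apply (step_end r L sg i s v w Hend Hs); auto. destruct Hst; auto.
    + destruct (IH w' v Htr Hne Hv) as [j [Hj1 Hj2]]. exists j. split; [right|]; auto.
Qed.

Lemma star_acyclic {X : Type} (r : X) (L : list X) (sg : X -> Seg X) :
  (forall b, In b L -> spath (sg b) 0 = r /\ spath (sg b) (slen (sg b)) = b) ->
  ~ In r L -> NoDup L ->
  forall u es, es <> nil -> NoDup es -> ~ trail (map sg L) u u es.
Proof.
  intros Hend Hr HN u es Hne Hnd Htr. destruct es as [|i es']; [contradiction|].
  inversion Hnd as [|? ? Hni Hnd']. subst.
  destruct Htr as [s [w [Hs [Hst Htr]]]].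
  destruct (classic (u = r)) as [->|Hur].
  - destruct (nth_map_inv sg L i s Hs) as [b [Hb ->]].
    assert (Hbin := nth_error_In _ _ Hb). destruct (Hend b Hbin) as [E0 E1].
    assert (Hw : w = b).
    { destruct Hst as [[A1 A2]|[A1 A2]]; [congruence|]. exfalso. apply Hr. congruence. }
    subst w. assert (Hbr : b <> r) by (intros ->; contradiction).
    destruct es' as [|j es'']. { simpl in Htr. congruence. }
    destruct Htr as [s' [w' [Hs' [Hst' _]]]].
    destruct (step_end r L sg j s' b w' Hend Hs' Hst' Hbr) as [Hj _].
    assert (i = j) by (apply (nodup_idx L i j b); auto). subst. apply Hni. left; auto.
  - destruct (step_end r L sg i s u w Hend Hs Hst Hur) as [Hi ->].
    destruct (reach r L sg Hend es' r u Htr (fun e => Hur (eq_sym e)) Hur) as [j [Hj1 Hj2]].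
    assert (i = j) by (apply (nodup_idx L i j u); auto). subst. contradiction.
Qed.

Lemma trail_app {X : Type} (E : list (Seg X)) u w v es1 es2 :
  trail E u w es1 -> trail E w v es2 -> trail E u v (es1 ++ es2).
Proof.
  revert u. induction es1 as [|i es IH]; intros u H1 H2.
  - simpl in *. subst. auto.
  - destruct H1 as [s [w' [Hs [Hst Htr]]]]. exists s, w'. split; auto.
Qed.

Lemma star_to_root {X : Type} (r : X) (L : list X) (sg : X -> Seg X) :
  (forall b, In b L -> spath (sg b) 0 = r /\ spath (sg b) (slen (sg b)) = b) ->
  forall u, In u (r :: L) -> exists es, trail (map sg L) u r es /\ trail (map sg L) r u (rev es).
Proof.
  intros Hend u Hu. destruct Hu as [<-|Hu].
  - exists nil. simpl. auto.
  - destruct (In_nth_error _ _ Hu) as [i Hi]. exists (i :: nil).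
    destruct (Hend u Hu) as [E0 E1].
    assert (Hs : nth_error (map sg L) i = Some (sg u)) by (rewrite nth_error_map, Hi; reflexivity).
    split; simpl.
    + exists (sg u), r. split; [exact Hs|]. split; [right; auto|reflexivity].
    + exists (sg u), u. split; [exact Hs|]. split; [left; auto|reflexivity].
Qed.

Theorem lemma2p1 (X : MetricSpace) (C : list X) :
  flat_cone_sphere X C -> exists E : list (Seg X), embedded_spanning_tree X C E.
Proof.
  intros HX. pose proof HX as [Hh [Hi [HND _]]].
  destruct C as [|r L].
  - exists nil. split; [|split; [|split]].
    + intros s [].
    + intros u v [].
    + intros u es Hne _ Htr. destruct es as [|i es]; [contradiction|].
      destruct Htr as [s [w [Hs _]]]. destruct i; discriminate.
    + intros i j si sj _ Hii. destruct i; discriminate.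
  - inversion HND as [|? ? Hr HL]. subst.
    destruct (choice_fun (fun b (g : R -> X) => r <> b -> g 0 = r /\ g (dist r b) = b /\ isom g (dist r b)))
      as [geo Hgeo].
    { intros b. destruct (classic (r = b)) as [<-|Hne].
      - exists (fun _ => r). intros H; contradiction.
      - destruct (geodesic_ex X Hh Hi r b Hne) as [g Hg]. exists g. auto. }
    set (sg := fun b => mkSeg X (dist r b) (geo b)).
    assert (Hrb : forall b, In b L -> r <> b) by (intros b Hb ->; contradiction).
    assert (Hend : forall b, In b L -> spath (sg b) 0 = r /\ spath (sg b) (slen (sg b)) = b).
    { intros b Hb. destruct (Hgeo b (Hrb b Hb)) as [A [B _]]. simpl. auto. }
    exists (map sg L). split; [|split; [|split]].
    + intros s Hs. apply in_map_iff in Hs. destruct Hs as [b [<- Hb]].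
      destruct (Hgeo b (Hrb b Hb)) as [A [B Iso]]. unfold straight_segment. simpl.
      split; [|split; [|split; [|split]]].
      * pose proof (dist_nonneg X r b). destruct (Req_dec (dist r b) 0) as [E|]; [|lra].
        apply dist_sep in E. exfalso. apply (Hrb b Hb); auto.
      * left. auto.
      * right. rewrite B. auto.
      * intros t Ht. apply (no_cone X (r :: L) HX (geo b) (dist r b) Iso t Ht).
      * split.
        -- intros t1 t2 H1 H2 E. assert (dist (geo b t1) (geo b t2) = 0) by (rewrite E; apply dist_refl).
           rewrite Iso in H by auto. destruct (Req_dec t1 t2); auto.
           exfalso. assert (Hz : t1 - t2 <> 0) by lra. apply Rabs_pos_lt in Hz. lra.
        -- intros t Ht. exists 1. split; [lra|]. intros a c Ha Hc _ _. apply Iso; auto.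
    + intros u v Hu Hv.
      destruct (star_to_root r L sg Hend u Hu) as [es1 [H1 _]].
      destruct (star_to_root r L sg Hend v Hv) as [es2 [_ H2]].
      exists (es1 ++ rev es2). exact (trail_app _ u r v es1 (rev es2) H1 H2).
    + exact (star_acyclic r L sg Hend Hr HL).
    + intros i j si sj Hij Hsi Hsj a b Ha Hb.
      destruct (nth_map_inv sg L i si Hsi) as [bi [Hbi ->]].
      destruct (nth_map_inv sg L j sj Hsj) as [bj [Hbj ->]].
      assert (Ini := nth_error_In _ _ Hbi). assert (Inj := nth_error_In _ _ Hbj).
      assert (Hne : bi <> bj) by (intros <-; apply Hij; apply (nodup_idx L i j bi); auto).
      destruct (Hgeo bi (Hrb bi Ini)) as [A1 [B1 I1]].
      destruct (Hgeo bj (Hrb bj Inj)) as [A2 [B2 I2]].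
      simpl in Ha, Hb |- *.
      apply (star_geo X (r :: L) HX r bi bj (geo bi) (geo bj) (dist r bi) (dist r bj)); auto;
        right; auto.
Qed.
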